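(* Let $(\mathcal E,B,\mathcal L_{\mathcal P})$ be an epistemic space with $|\mathcal P|\ge2$. Any ES basic fusion operator that satisfies (ESF-SD), (ESF-U) and (ESF-I) also satisfies (ESF-D).
   Context: $[\![\phi]\!]$ denotes models; $\varphi_M$ a formula with models exactly $M$. Epistemic space: $\mathcal E$ nonempty, $B:\mathcal E\to\mathcal L_{\mathcal P}$ (propositional formulas over finite $\mathcal P$) with image modulo equivalence exactly the consistent formulas. Agents: well-ordered set $\mathcal S$; society: nonempty finite $N\subseteq\mathcal S$; $N$-profile $\Phi:N\to\mathcal E$, $E_i=\Phi(i)$, identified with $E_i$ if $N=\{i\}$; profiles on $\{i_1<\dots<i_n\}$, $\{j_1<\dots<j_m\}$ equivalent if $n=m$ and entries coincide position-wise. ES basic fusion operator: a map $\nabla(\Phi,E)\in\mathcal E$ with (ESF1) $B(\nabla(\Phi,E))\vdash B(E)$; (ESF2) equivalent profiles and $B(E)\equiv B(E')$ give equivalent $B(\nabla)$; (ESF3) if $B(E)\equiv B(E')\wedge B(E'')$ then $B(\nabla(\Phi,E'))\wedge B(E'')\vdash B(\nabla(\Phi,E))$; (ESF4) if moreover $B(\nabla(\Phi,E'))\wedge B(E'')\nvdash\bot$ then $B(\nabla(\Phi,E))\vdash B(\nabla(\Phi,E'))\wedge B(E'')$. (ESF-SD): for every agent $i$, interpretations $w,w',w''$ and $E_{w,w'},E_{w',w''}$ with $[\![B(E_{w,w'})]\!]=\{w,w'\}$, $[\![B(E_{w',w''})]\!]=\{w',w''\}$, there exist $i$-profiles realising each of: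 (i) $B(\nabla(E_i,E_{w,w'}))\equiv\varphi_{w,w'}$ and $B(\nabla(E_i,E_{w',w''}))\equiv\varphi_{w',w''}$; (ii) $\equiv\varphi_{w,w'}$ and $\equiv\varphi_{w'}$; (iii) $\equiv\varphi_w$ and $\equiv\varphi_{w',w''}$; (iv) $\equiv\varphi_w$ and $\equiv\varphi_{w'}$. (ESF-U): for every $N$, $N$-profile $\Phi$, $E$: if $E_i=E_j$ for all $i,j\in N$ then $B(\nabla(\Phi,E))\equiv B(\nabla(E_i,E))$ for all $i\in N$. (ESF-I): for every $N$, $N$-profiles $\Phi,\Phi'$, $E$: if for every $E'$ with $B(E')\vdash B(E)$, $B(\nabla(E_j,E'))\equiv B(\nabla(E'_j,E'))$ for all $j\in N$, then $B(\nabla(\Phi,E))\equiv B(\nabla(\Phi',E))$. (ESF-D): for every society $N$ there exists $d_N\in N$ such that for every $N$-profile $\Phi$ and every $E$, $B(\nabla(\Phi,E))\vdash B(\nabla(E_{d_N},E))$. *)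

(* Defs.v *)
From HB Require Import structures.
From mathcomp Require Import all_boot all_order.
Set Implicit Arguments. Unset Strict Implicit. Unset Printing Implicit Defensive.

Inductive form (P : Type) : Type :=
  | FVar of P
  | FTop
  | FBot
  | FNeg of form P
  | FAnd of form P & form P
  | FOr of form P & form P
  | FImp of form P & form P.

Definition interp (P : finType) := {ffun P -> bool}.

Fixpoint eval (P : finType) (w : interp P) (f : form P) : bool :=
  match f with
  | FVar p => w p
  | FTop => true
  | FBot => false
  | FNeg g => ~~ eval w g
  | FAnd g h => eval w g && eval w h
  | FOr g h => eval w g || eval w h
  | FImp g h => eval w g ==> eval w h
  end.

Definition models (P : finType) (f : form P) : {set interp P} := [set w | eval w f].

Definition entails (P : finType) (f g : form P) : Prop :=
  forall w : interp P, eval w f -> eval w g.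
Definition fequiv (P : finType) (f g : form P) : Prop := entails f g /\ entails g f.
Definition consistent (P : finType) (f : form P) : Prop := exists w : interp P, eval w f.

Definition epistemic_space (P : finType) (E : Type) (B : E -> form P) : Prop :=
  inhabited E /\
  (forall e : E, consistent (B e)) /\
  (forall f : form P, consistent f -> exists e : E, fequiv (B e) f).

(* A society = nonempty finite subset of the (well-)ordered set S of agents,
   represented canonically by its strictly increasing enumeration. *)
Record society (d : Order.disp_t) (S : orderType d) := Society {
  soc_seq :> seq S;
  soc_sorted : sorted (fun x y : S => (x < y)%O) soc_seq;
  soc_nonempty : 0 < size soc_seq }.

Definition single (d : Order.disp_t) (S : orderType d) (i : S) : society S :=
  @Society d S [:: i] erefl erefl.

Definition profile (E : Type) (d : Order.disp_t) (S : orderType d) (N : society S) :=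
  seq_sub (soc_seq N) -> E.

Definition sprof (E : Type) (d : Order.disp_t) (S : orderType d) (i : S) (Ei : E)
  : profile E (single i) := fun _ => Ei.
Arguments sprof {E d S} i Ei _.

(* equivalent profiles: same size, entries coincide position-wise
   (positions w.r.t. the increasing enumeration) *)
Definition prof_equiv (E : Type) (d : Order.disp_t) (S : orderType d)
  (N M : society S) (Phi : profile E N) (Psi : profile E M) : Prop :=
  size N = size M /\
  forall (i : seq_sub (soc_seq N)) (j : seq_sub (soc_seq M)),
    index (val i) N = index (val j) M -> Phi i = Psi j.

Definition fusion_op (E : Type) (d : Order.disp_t) (S : orderType d) :=
  forall N : society S, profile E N -> E -> E.

Section FusionProps.
Variables (P : finType) (E : Type) (B : E -> form P) (d : Order.disp_t) (S : orderType d).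
Variable nabla : fusion_op E S.

Definition nab1 (i : S) (Ei e : E) : E := nabla (sprof i Ei) e.

Definition ESF1 := forall N (Phi : profile E N) e, entails (B (nabla Phi e)) (B e).
Definition ESF2 := forall N M (Phi : profile E N) (Psi : profile E M) e e',
  prof_equiv Phi Psi -> fequiv (B e) (B e') ->
  fequiv (B (nabla Phi e)) (B (nabla Psi e')).
Definition ESF3 := forall N (Phi : profile E N) e e' e'',
  fequiv (B e) (FAnd (B e') (B e'')) ->
  entails (FAnd (B (nabla Phi e')) (B e'')) (B (nabla Phi e)).
Definition ESF4 := forall N (Phi : profile E N) e e' e'',
  fequiv (B e) (FAnd (B e') (B e'')) ->
  consistent (FAnd (B (nabla Phi e')) (B e'')) ->
  entails (B (nabla Phi e)) (FAnd (B (nabla Phi e')) (B e'')).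

Definition basic_fusion := [/\ ESF1, ESF2, ESF3 & ESF4].

(* (ESF-SD); "B(x) == phi_M" is written as "models (B x) = M" *)
Definition ESF_SD := forall (i : S) (w w' w'' : interp P) (ew ew' : E),
  w != w' -> w' != w'' -> w != w'' ->
  models (B ew) = [set w; w'] -> models (B ew') = [set w'; w''] ->
  [/\ (exists Ei, models (B (nab1 i Ei ew)) = [set w; w'] /\
                  models (B (nab1 i Ei ew')) = [set w'; w'']),
      (exists Ei, models (B (nab1 i Ei ew)) = [set w; w'] /\
                  models (B (nab1 i Ei ew')) = [set w']),
      (exists Ei, models (B (nab1 i Ei ew)) = [set w] /\
                  models (B (nab1 i Ei ew')) = [set w'; w''])
    & (exists Ei, models (B (nab1 i Ei ew)) = [set w] /\
                  models (B (nab1 i Ei ew')) = [set w'])].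

Definition ESF_U := forall N (Phi : profile E N) e,
  (forall i j : seq_sub (soc_seq N), Phi i = Phi j) ->
  forall i : seq_sub (soc_seq N),
    fequiv (B (nabla Phi e)) (B (nab1 (val i) (Phi i) e)).

Definition ESF_I := forall N (Phi Phi' : profile E N) e,
  (forall e', entails (B e') (B e) ->
     forall j : seq_sub (soc_seq N),
       fequiv (B (nab1 (val j) (Phi j) e')) (B (nab1 (val j) (Phi' j) e'))) ->
  fequiv (B (nabla Phi e)) (B (nabla Phi' e)).

Definition ESF_D := forall N : society S, exists dN : seq_sub (soc_seq N),
  forall (Phi : profile E N) e,
    entails (B (nabla Phi e)) (B (nab1 (val dN) (Phi dN) e)).

End FusionProps.

(* Main.v *)
Require Import Defs.
From HB Require Import structures.
From mathcomp Require Import all_boot all_order.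
From Stdlib Require Import ClassicalEpsilon.
Set Implicit Arguments. Unset Strict Implicit. Unset Printing Implicit Defensive.
Section RelFacts.
Variables (A : Type) (r : A -> A -> bool).
Hypothesis rtot : forall x y, r x y || r y x.
Hypothesis rtr : forall x y z, r x y -> r y z -> r x z.
Lemma rPP a b c : ~~ r b a -> ~~ r c b -> ~~ r c a.
Proof.
move=> h1 h2; apply/negP=> hca; move: (rtot a b); rewrite (negbTE h1) orbF => hab.
by move: h2; rewrite (rtr hca hab).
Qed.
Lemma rRP a b c : r a b -> ~~ r c b -> ~~ r c a.
Proof. by move=> h1 h2; apply/negP=> hca; move: h2; rewrite (rtr hca h1). Qed.
Lemma rPR a b c : ~~ r b a -> r b c -> ~~ r c a.
Proof. by move=> h1 h2; apply/negP=> hca; move: h1; rewrite (rtr h2 hca). Qed.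
Lemma rP_R a b : ~~ r b a -> r a b.
Proof. by move=> h; move: (rtot a b); rewrite (negbTE h) orbF. Qed.
End RelFacts.

Lemma fch (T St : Type) (Q : T -> St -> Prop) :
  (forall j, exists s, Q j s) -> exists f : T -> St, forall j, Q j (f j).
Proof.
move=> H; exists (fun j => proj1_sig (constructive_indefinite_description _ (H j))).
move=> j; exact: proj2_sig (constructive_indefinite_description _ (H j)).
Qed.

Section Arrow.
Variables (A : eqType) (T : finType) (St : Type).
Variable ind : T -> St -> A -> A -> bool.
Variable G : (T -> St) -> A -> A -> bool.
Hypothesis ind_total : forall j s x y, ind j s x y || ind j s y x.
Hypothesis ind_trans : forall j s x y z, ind j s x y -> ind j s y z -> ind j s x z.
Hypothesis G_total : forall Phi x y, G Phi x y || G Phi y x.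
Hypothesis G_trans : forall Phi x y z, G Phi x y -> G Phi y z -> G Phi x z.
Hypothesis IIA : forall Phi Phi' x y,
  (forall j, ind j (Phi j) x y = ind j (Phi' j) x y /\ ind j (Phi j) y x = ind j (Phi' j) y x) ->
  G Phi x y = G Phi' x y.
Hypothesis pareto : forall Phi x y, (forall j, ~~ ind j (Phi j) y x) -> ~~ G Phi y x.
Hypothesis rich4 : forall j a b c, a != b -> b != c -> a != c ->
  exists s, ~~ ind j s b a /\ ~~ ind j s c b.
Hypothesis rich3 : forall j a b c, a != b -> b != c -> a != c ->
  exists s, [/\ ~~ ind j s b a, ind j s b c & ind j s c b].
Hypothesis rich2 : forall j a b c, a != b -> b != c -> a != c ->
  exists s, [/\ ind j s a b, ind j s b a & ~~ ind j s c b].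
Hypothesis three : exists x y z : A, [/\ x != y, y != z & x != z].

Definition AD (V : {set T}) x y := forall Phi,
  (forall j, j \in V -> ~~ ind j (Phi j) y x) ->
  (forall j, j \notin V -> ~~ ind j (Phi j) x y) -> ~~ G Phi y x.
Definition D2 (V : {set T}) x y := forall Phi,
  (forall j, j \in V -> ~~ ind j (Phi j) y x) -> ~~ G Phi y x.

Let iPP j s := rPP (ind_total j s) (@ind_trans j s).
Let iRP j s := rRP (@ind_trans j s).
Let iPR j s := rPR (@ind_trans j s).
Let iP_R j s := rP_R (ind_total j s).
Let GPP Phi := rPP (G_total Phi) (@G_trans Phi).
Let GRP Phi := rRP (@G_trans Phi).

Lemma L1 V x y z : x != y -> y != z -> x != z -> AD V x y -> D2 V x z.
Proof.
move=> xy yz xz hA Phi HV.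
have yx : y != x by rewrite eq_sym.
have zy : z != y by rewrite eq_sym.
have zx : z != x by rewrite eq_sym.
have [f1 Hf1] := fch (fun j => rich4 j xy yz xz).
have H2 : forall j, exists s, [/\ ~~ ind j s x y, ~~ ind j s z y,
   ind j (Phi j) x z = ind j s x z & ind j (Phi j) z x = ind j s z x].
  move=> j.
  case exz: (ind j (Phi j) x z); case ezx: (ind j (Phi j) z x).
  - have [s [h1 h2 h3]] := rich3 j yx xz yz.
    by exists s; split; rewrite ?h2 ?h3 //; apply: (iPR h1 h2).
  - have [s [h1 h2]] := rich4 j yx xz yz.
    by exists s; split; rewrite ?(negbTE h2) ?(iP_R h2) //; apply: (iPP h1 h2).
  - have [s [h1 h2]] := rich4 j yz zx yx.
    by exists s; split; rewrite ?(negbTE h2) ?(iP_R h2) //; apply: (iPP h1 h2).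
  - by move: (ind_total j (Phi j) x z); rewrite exz ezx.
have [f2 Hf2] := fch H2.
pose Phi' := fun j => if j \in V then f1 j else f2 j.
have g1 : ~~ G Phi' y x.
  apply: hA => j hj; rewrite /Phi' ?hj ?(negbTE hj).
  - by case: (Hf1 j).
  - by case: (Hf2 j).
have g2 : ~~ G Phi' z y.
  apply: pareto => j; rewrite /Phi'; case: ifP => _.
  - by case: (Hf1 j).
  - by case: (Hf2 j).
have g3 := GPP g1 g2.
rewrite (IIA (Phi' := Phi')) // => j; rewrite /Phi'; case: ifP => hj.
- have h1 := HV j hj; case: (Hf1 j) => a1 a2; have a3 := iPP a1 a2.
  by rewrite (negbTE h1) (negbTE a3) (iP_R h1) (iP_R a3).
- by case: (Hf2 j).
Qed.
Lemma L2 V x y z : x != y -> y != z -> x != z -> AD V x y -> D2 V z y.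
Proof.
move=> xy yz xz hA Phi HV.
have yx : y != x by rewrite eq_sym.
have zy : z != y by rewrite eq_sym.
have zx : z != x by rewrite eq_sym.
have [f1 Hf1] := fch (fun j => rich4 j zx xy zy).
have H2 : forall j, exists s, [/\ ~~ ind j s x z, ~~ ind j s x y,
   ind j (Phi j) z y = ind j s z y & ind j (Phi j) y z = ind j s y z].
  move=> j.
  case ezy: (ind j (Phi j) z y); case eyz: (ind j (Phi j) y z).
  - have [s [h1 h2 h3]] := rich2 j zy yx zx.
    by exists s; split; rewrite ?h1 ?h2 //; apply: (iRP h1 h3).
  - have [s [h1 h2]] := rich4 j zy yx zx.
    by exists s; split; rewrite ?(negbTE h1) ?(iP_R h1) //; apply: (iPP h1 h2).
  - have [s [h1 h2]] := rich4 j yz zx yx.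
    by exists s; split; rewrite ?(negbTE h1) ?(iP_R h1) //; apply: (iPP h1 h2).
  - by move: (ind_total j (Phi j) z y); rewrite ezy eyz.
have [f2 Hf2] := fch H2.
pose Phi' := fun j => if j \in V then f1 j else f2 j.
have g1 : ~~ G Phi' x z.
  apply: pareto => j; rewrite /Phi'; case: ifP => _.
  - by case: (Hf1 j).
  - by case: (Hf2 j).
have g2 : ~~ G Phi' y x.
  apply: hA => j hj; rewrite /Phi' ?hj ?(negbTE hj).
  - by case: (Hf1 j).
  - by case: (Hf2 j).
have g3 := GPP g1 g2.
rewrite (IIA (Phi' := Phi')) // => j; rewrite /Phi'; case: ifP => hj.
- have h1 := HV j hj; case: (Hf1 j) => a1 a2; have a3 := iPP a1 a2.
  by rewrite (negbTE h1) (negbTE a3) (iP_R h1) (iP_R a3).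
- by case: (Hf2 j).
Qed.

Lemma D2_AD V x y : D2 V x y -> AD V x y.
Proof. by move=> h Phi H _; apply: h. Qed.

Lemma third (x y : A) : exists z, (z != x) && (z != y).
Proof.
have [a [b [c [ab bc ac]]]] := three.
case ha: ((a != x) && (a != y)); first by exists a.
case hb: ((b != x) && (b != y)); first by exists b.
exists c; apply/andP; split; apply/negP => /eqP hc; rewrite hc in bc ac.
- rewrite ac /= in ha; rewrite bc /= in hb.
  move/negbFE/eqP: ha => ha; move/negbFE/eqP: hb => hb.
  by rewrite ha hb eqxx in ab.
- rewrite ac /= andbT in ha; rewrite bc /= andbT in hb.
  move/negbFE/eqP: ha => ha; move/negbFE/eqP: hb => hb.
  by rewrite ha hb eqxx in ab.
Qed.

Lemma AD_D V x y : x != y -> AD V x y -> D2 V x y.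
Proof.
move=> xy hA; have [z /andP [zx zy]] := third x y.
have xz : x != z by rewrite eq_sym.
have yz : y != z by rewrite eq_sym.
have h1 := L1 xy yz xz hA.
exact: (L1 xz zy xy (D2_AD h1)).
Qed.

Lemma D_x_all V x y : x != y -> AD V x y -> forall w, w != x -> D2 V x w.
Proof.
move=> xy hA w wx; case wy: (w == y).
  by move/eqP: wy => ->; apply: AD_D.
have yw : y != w by rewrite eq_sym wy.
have xw : x != w by rewrite eq_sym.
exact: (L1 xy yw xw hA).
Qed.

Lemma expand V x y : x != y -> AD V x y -> forall u v, u != v -> D2 V u v.
Proof.
move=> xy hA u v uv.
case vx: (v == x).
  move/eqP: vx => ?; subst v.
  have [w /andP [wx wu]] := third x u.
  have h1 := D_x_all xy hA wx.
  have xw : x != w by rewrite eq_sym.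
  have xu : x != u by rewrite eq_sym.
  have uw : u != w by rewrite eq_sym.
  have h2 := L2 xw wu xu (D2_AD h1).
  exact: (L1 uw wx uv (D2_AD h2)).
have h1 := D_x_all xy hA (negbT vx).
case ux: (u == x); first by move/eqP: ux => ->.
have xv : x != v by rewrite eq_sym vx.
have vu : v != u by rewrite eq_sym.
have xu : x != u by rewrite eq_sym ux.
exact: (L2 xv vu xu (D2_AD h1)).
Qed.
Definition Dec V := forall u v, u != v -> D2 V u v.

Lemma contract (V : {set T}) (d : T) : d \in V -> Dec V ->
  (exists x y, x != y /\ AD [set d] x y) \/ (exists x y, x != y /\ AD (V :\ d) x y).
Proof.
move=> dV hD.
have [x [y [z [xy yz xz]]]] := three.
have yx : y != x by rewrite eq_sym.
have zy : z != y by rewrite eq_sym.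
have zx : z != x by rewrite eq_sym.
have [f1 Hf1] := fch (fun j => rich4 j xy yz xz).
have [f2 Hf2] := fch (fun j => rich4 j zx xy zy).
have [f3 Hf3] := fch (fun j => rich4 j yz zx yx).
pose Phi := fun j => if j == d then f1 j else if j \in V then f2 j else f3 j.
have g1 : ~~ G Phi y x.
  apply: (hD x y xy) => j hj; rewrite /Phi; case: ifP => _.
  - by case: (Hf1 j).
  - by rewrite hj; case: (Hf2 j).
case gzx: (G Phi z x).
- right; exists z, y; split => // Psi HV HO.
  rewrite -(IIA (Phi := Phi)); first exact: (GRP gzx g1).
  move=> j; case hj: (j \in V :\ d).
  + have h := HV j hj; move: hj; rewrite in_setD1 => /andP [jd jV].
    rewrite /Phi (negbTE jd) jV; case: (Hf2 j) => a1 a2; have a3 := iPP a1 a2.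
    by rewrite (negbTE h) (negbTE a3) (iP_R h) (iP_R a3).
  + have h := HO j (negbT hj); move: hj; rewrite in_setD1 /Phi.
    case: ifP => jd /=.
    * case: (Hf1 j) => a1 a2.
      by rewrite (negbTE h) (negbTE a2) (iP_R h) (iP_R a2).
    * move=> ->; case: (Hf3 j) => a1 a2.
      by rewrite (negbTE h) (negbTE a1) (iP_R h) (iP_R a1).
- left; exists x, z; split => // Psi HV HO.
  rewrite -(IIA (Phi := Phi)); first by rewrite gzx.
  move=> j; case hj: (j \in [set d]).
  + have h := HV j hj; move: hj; rewrite in_set1 => jd.
    rewrite /Phi jd; case: (Hf1 j) => a1 a2; have a3 := iPP a1 a2.
    by rewrite (negbTE h) (negbTE a3) (iP_R h) (iP_R a3).
  + have h := HO j (negbT hj); move: hj; rewrite in_set1 /Phi => ->.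
    case: ifP => _.
    * case: (Hf2 j) => a1 a2.
      by rewrite (negbTE h) (negbTE a1) (iP_R h) (iP_R a1).
    * case: (Hf3 j) => a1 a2.
      by rewrite (negbTE h) (negbTE a2) (iP_R h) (iP_R a2).
Qed.

Lemma Dec_set0 : ~ Dec set0.
Proof.
move=> hD.
have [x [y [z [xy yz xz]]]] := three.
have yx : y != x by rewrite eq_sym.
have [f Hf] := fch (fun j => rich4 j yx xz yz).
have g1 : ~~ G f x y by apply: pareto => j; case: (Hf j).
have g2 : ~~ G f y x by apply: (hD x y xy) => j; rewrite in_set0.
by move: (G_total f x y); rewrite (negbTE g1) (negbTE g2).
Qed.

Lemma arrow : exists d, forall Phi x y, ~~ ind d (Phi d) y x -> ~~ G Phi y x.
Proof.
have decT : Dec setT by move=> u v uv Phi H; apply: pareto => j; apply: H; rewrite in_setT.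
suff [d hd] : exists d, Dec [set d].
  exists d => Phi x y h.
  case: (eqVneq x y) => [exy|nxy].
    by subst; move: h (ind_total d (Phi d) y y); rewrite orbb => /negbTE ->.
  by apply: (hd x y nxy) => j; rewrite in_set1 => /eqP ->.
suff : forall n (V : {set T}), #|V| <= n -> Dec V -> exists d, Dec [set d].
  by move/(_ #|[set: T]| setT (leqnn _) decT).
elim=> [|n IH] V hV hD.
  by move: hV; rewrite leqn0 cards_eq0 => /eqP V0; subst; case: Dec_set0.
case: (set_0Vmem V) => [V0|[d dV]]; first by subst; case: Dec_set0.
case: (contract dV hD) => [[x [y [xy hA]]]|[x [y [xy hA]]]].
  by exists d; apply: (expand xy hA).
apply: (IH (V :\ d)); last exact: (expand xy hA).
by move: hV; rewrite (cardsD1 d V) dV.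
Qed.
End Arrow.

Section Forms.
Variable P : finType.
Fixpoint bigAnd (l : seq (form P)) : form P :=
  if l is f :: l' then FAnd f (bigAnd l') else FTop P.
Fixpoint bigOr (l : seq (form P)) : form P :=
  if l is f :: l' then FOr f (bigOr l') else FBot P.
Lemma eval_bigAnd w l : eval w (bigAnd l) = all (eval w) l.
Proof. by elim: l => //= f l ->. Qed.
Lemma eval_bigOr w l : eval w (bigOr l) = has (eval w) l.
Proof. by elim: l => //= f l ->. Qed.
Definition lit (w : interp P) p : form P := if w p then FVar p else FNeg (FVar p).
Lemma eval_lit v w p : eval v (lit w p) = (v p == w p).
Proof. by rewrite /lit; case: ifP => h /=; rewrite ?h; case: (v p). Qed.
Definition chr (w : interp P) := bigAnd [seq lit w p | p <- enum P].
Lemma eval_chr v w : eval v (chr w) = (v == w).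
Proof.
rewrite eval_bigAnd all_map; apply/allP/eqP.
- move=> h; apply/ffunP => p; have := h p; rewrite mem_enum => /(_ isT).
  by rewrite /= eval_lit => /eqP.
- by move=> -> p _ /=; rewrite eval_lit.
Qed.
Definition phiM (M : {set interp P}) := bigOr [seq chr w | w <- enum M].
Lemma eval_phiM v M : eval v (phiM M) = (v \in M).
Proof.
rewrite eval_bigOr has_map; apply/hasP/idP.
- by case=> w; rewrite mem_enum /= eval_chr => wM /eqP ->.
- by move=> vM; exists v; rewrite ?mem_enum //= eval_chr.
Qed.
Lemma fequivP (f g : form P) : fequiv f g <-> models f = models g.
Proof.
split.
- by case=> h1 h2; apply/setP => w; rewrite !inE; apply/idP/idP; [apply: h1|apply: h2].
- by move=> h; split => w; move/setP/(_ w): h; rewrite !inE => ->.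
Qed.
End Forms.

Section Bridge.
Variables (P : finType) (E : Type) (B : E -> form P).
Hypothesis hES : epistemic_space B.
Local Notation W := (interp P).

Lemma models_ne e : models (B e) != set0.
Proof.
case: hES => _ [hc _]; case: (hc e) => w hw.
by apply/set0Pn; exists w; rewrite inE.
Qed.

Lemma exists_e (M : {set W}) : M != set0 -> exists e, models (B e) = M.
Proof.
move=> /set0Pn [w wM]; case: hES => _ [_ hs].
have [e he] : exists e, fequiv (B e) (phiM M).
  by apply: hs; exists w; rewrite eval_phiM.
exists e; move/fequivP: he => ->; by apply/setP => v; rewrite inE eval_phiM.
Qed.

Definition eM (M : {set W}) : E := epsilon (proj1 hES) (fun e => models (B e) = M).
Lemma eM_spec M : M != set0 -> models (B (eM M)) = M.
Proof. by move=> h; exact: (epsilon_spec (proj1 hES) (fun e => models (B e) = M) (exists_e h)). Qed.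
Lemma evM M w : M != set0 -> eval w (B (eM M)) = (w \in M).
Proof. by move=> h; rewrite -[in RHS](eM_spec h) inE. Qed.

Definition good (f : E -> E) :=
  [/\ forall e, entails (B (f e)) (B e),
      forall e e', fequiv (B e) (B e') -> fequiv (B (f e)) (B (f e')),
      forall e e' e'', fequiv (B e) (FAnd (B e') (B e'')) ->
        entails (FAnd (B (f e')) (B e'')) (B (f e))
    & forall e e' e'', fequiv (B e) (FAnd (B e') (B e'')) ->
        consistent (FAnd (B (f e')) (B e'')) ->
        entails (B (f e)) (FAnd (B (f e')) (B e''))].

Section Choice.
Variable f : E -> E.
Hypothesis hf : good f.

Definition Ch (M : {set W}) := models (B (f (eM M))).
Definition Rf (x y : W) := x \in Ch [set x; y].

Lemma Ch_e e : models (B (f e)) = Ch (models (B e)).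
Proof.
case: hf => _ F2 _ _; apply/fequivP; apply: F2; apply/fequivP.
by rewrite eM_spec ?models_ne.
Qed.

Lemma Ch_sub (M : {set W}) : M != set0 -> Ch M \subset M.
Proof.
case: hf => F1 _ _ _ MN; apply/subsetP => w; rewrite /Ch inE => h.
by rewrite -(evM w MN); apply: F1.
Qed.

Lemma Ch_ne (M : {set W}) : Ch M != set0.
Proof. exact: models_ne. Qed.

Lemma Ch_arrow (M M' : {set W}) : M' \subset M -> M' != set0 -> Ch M :&: M' != set0 ->
  Ch M' = Ch M :&: M'.
Proof.
case: hf => _ _ F3 F4 sub M'N hne.
have MN : M != set0.
  case/set0Pn: M'N => w wM'; apply/set0Pn; exists w; exact: (subsetP sub).
have eq : fequiv (B (eM M')) (FAnd (B (eM M)) (B (eM M'))).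
  apply/fequivP; apply/setP => w; rewrite !inE /= !evM //.
  by case wM': (w \in M'); rewrite ?andbF ?andbT ?(subsetP sub).
apply/setP => w; rewrite /Ch !inE; apply/idP/idP.
- move=> h; have := F4 _ _ _ eq.
  case/set0Pn: hne => v; rewrite !inE => /andP [v1 v2].
  have hc : consistent (FAnd (B (f (eM M))) (B (eM M'))).
    by exists v; rewrite /= (evM v M'N) v2 andbT; move: v1; rewrite ?inE.
  by move=> /(_ hc w h) /=; rewrite evM // => /andP [-> ->].
- by move=> /andP [h1 h2]; apply: (F3 _ _ _ eq); rewrite /= h1 evM.
Qed.


Lemma pairne (x y : W) : [set x; y] != set0.
Proof. by apply/set0Pn; exists x; rewrite !inE eqxx. Qed.
Lemma pC (x y : W) : [set y; x] = [set x; y].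
Proof. exact: setUC. Qed.

Lemma Ch1 w : Ch [set w] = [set w].
Proof.
have wN : [set w] != set0 by apply/set0Pn; exists w; rewrite in_set1.
have sub := Ch_sub wN.
apply/eqP; rewrite eqEsubset sub /=; apply/subsetP => v; rewrite in_set1 => /eqP ->.
case/set0Pn: (Ch_ne [set w]) => u hu; have := subsetP sub u hu.
by rewrite in_set1 => /eqP e; rewrite e in hu.
Qed.

Lemma Ch_pairE x y v : (v \in Ch [set x; y]) = ((v == x) && Rf x y) || ((v == y) && Rf y x).
Proof.
rewrite /Rf (pC x y); apply/idP/idP.
- move=> h; have := subsetP (Ch_sub (pairne x y)) v h.
  by rewrite !in_set2 => /orP [/eqP e|/eqP e]; subst v; rewrite eqxx h ?orbT.
- by case/orP => /andP [/eqP -> h].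
Qed.

Lemma Rf_total x y : Rf x y || Rf y x.
Proof.
case/set0Pn: (Ch_ne [set x; y]) => u hu; have := subsetP (Ch_sub (pairne x y)) u hu.
rewrite !in_set2 => /orP [/eqP e|/eqP e]; rewrite e in hu; rewrite /Rf;
  [by rewrite hu | by rewrite (pC x y) hu orbT].
Qed.

Lemma Rf_Ch (M : {set W}) x y : x \in Ch M -> y \in M -> Rf x y.
Proof.
move=> hx yM.
have MN : M != set0 by apply/set0Pn; exists y.
have xM := subsetP (Ch_sub MN) x hx.
have sub : [set x; y] \subset M by apply/subsetP => v; rewrite !in_set2 => /orP [/eqP->|/eqP->].
have ne : Ch M :&: [set x; y] != set0 by apply/set0Pn; exists x; rewrite in_setI in_set2 hx eqxx.
by rewrite /Rf (Ch_arrow sub (pairne x y) ne) in_setI in_set2 hx eqxx.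
Qed.

Lemma Ch_back (M : {set W}) x y : x \in M -> y \in Ch M -> Rf x y -> x \in Ch M.
Proof.
move=> xM hy hR.
have MN : M != set0 by apply/set0Pn; exists x.
have yM := subsetP (Ch_sub MN) y hy.
have sub : [set x; y] \subset M by apply/subsetP => v; rewrite !in_set2 => /orP [/eqP->|/eqP->].
have ne : Ch M :&: [set x; y] != set0 by apply/set0Pn; exists y; rewrite in_setI in_set2 hy eqxx orbT.
by move: hR; rewrite /Rf (Ch_arrow sub (pairne x y) ne) in_setI => /andP [].
Qed.

Lemma Rf_trans x y z : Rf x y -> Rf y z -> Rf x z.
Proof.
move=> hxy hyz.
pose T := [set x; y; z].
have xT : x \in T by rewrite !inE eqxx.
have yT : y \in T by rewrite !inE eqxx ?orbT.
have zT : z \in T by rewrite !inE eqxx ?orbT.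
have hx : x \in Ch T.
  case/set0Pn: (Ch_ne T) => u hu.
  have TN : T != set0 by apply/set0Pn; exists x.
  have := subsetP (Ch_sub TN) u hu; rewrite /T in_setU in_set2 in_set1.
  case/orP => [/orP [/eqP e|/eqP e]|/eqP e]; rewrite e in hu => //.
  - exact: (Ch_back xT hu hxy).
  - exact: (Ch_back xT (Ch_back yT hu hyz) hxy).
exact: (Rf_Ch hx zT).
Qed.
End Choice.
Lemma sub_pair (M : {set W}) x y : M \subset [set x; y] -> M != set0 ->
  [\/ M = [set x], M = [set y] | M = [set x; y]].
Proof.
move=> sub MN.
case hx: (x \in M); case hy: (y \in M).
- apply: Or33; apply/eqP; rewrite eqEsubset sub /=.
  by apply/subsetP => v; rewrite !inE => /orP [/eqP->|/eqP->].
- apply: Or31; apply/setP => v; rewrite inE; apply/idP/idP => [vM|/eqP->//].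
  by have := subsetP sub v vM; rewrite !inE => /orP [//|/eqP ev]; rewrite ev hy in vM.
- apply: Or32; apply/setP => v; rewrite inE; apply/idP/idP => [vM|/eqP->//].
  by have := subsetP sub v vM; rewrite !inE => /orP [/eqP ev|//]; rewrite ev hx in vM.
- case/set0Pn: MN => v vM; have := subsetP sub v vM.
  by rewrite !inE => /orP [/eqP ev|/eqP ev]; rewrite ev ?hx ?hy in vM.
Qed.

Lemma pair_IIA f g x y : good f -> good g ->
  Rf f x y = Rf g x y -> Rf f y x = Rf g y x ->
  forall M : {set W}, M \subset [set x; y] -> M != set0 -> Ch f M = Ch g M.
Proof.
move=> hf hg h1 h2 M sub MN.
case: (sub_pair sub MN) => ->.
- by rewrite !Ch1.
- by rewrite !Ch1.
- by apply/setP => v; rewrite !Ch_pairE // h1 h2.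
Qed.


Section Main.
Variables (d : Order.disp_t) (S : orderType d) (nabla : fusion_op E S).
Hypothesis hbf : basic_fusion B nabla.
Hypothesis hSD : ESF_SD B nabla.
Hypothesis hU : ESF_U B nabla.
Hypothesis hI : ESF_I B nabla.
Hypothesis hP : 1 < #|P|.

Lemma prof_equiv_refl (N : society S) (Phi : profile E N) : prof_equiv Phi Phi.
Proof.
split => // i j h; congr Phi; apply: val_inj.
exact: (index_inj (val i) (valP i) (valP j) h).
Qed.

Lemma good_nabla (N : society S) (Phi : profile E N) : good (nabla Phi).
Proof.
case: hbf => h1 h2 h3 h4; split.
- exact: h1.
- by move=> e e' he; apply: h2 => //; apply: prof_equiv_refl.
- exact: h3.
- exact: h4.
Qed.

Lemma good_nab1 i s : good (nab1 nabla i s).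
Proof. exact: good_nabla. Qed.

Lemma nab1_agent i i' s e : models (B (nab1 nabla i s e)) = models (B (nab1 nabla i' s e)).
Proof.
apply/fequivP; case: hbf => _ h2 _ _; apply: h2; last by split.
by split.
Qed.

Variable N : society S.
Local Notation T := (seq_sub (soc_seq N)).
Definition ind (j : T) (s : E) (x y : W) := Rf (nab1 nabla (val j) s) x y.
Definition Gr (Phi : T -> E) (x y : W) := Rf (nabla Phi) x y.

Lemma IIA_N (Phi Phi' : T -> E) x y :
  (forall j, ind j (Phi j) x y = ind j (Phi' j) x y /\ ind j (Phi j) y x = ind j (Phi' j) y x) ->
  Gr Phi x y = Gr Phi' x y.
Proof.
move=> H.
have : fequiv (B (nabla Phi (eM [set x; y]))) (B (nabla Phi' (eM [set x; y]))).
  apply: hI => e' he j; apply/fequivP.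
  rewrite !(Ch_e (good_nab1 _ _)).
  case: (H j) => h1 h2.
  apply: (pair_IIA (good_nab1 _ _) (good_nab1 _ _) h1 h2); last exact: models_ne.
  apply/subsetP => w; rewrite inE => hw; rewrite -(evM w (pairne x y)); exact: he.
by move/fequivP; rewrite /Gr /Rf /Ch => ->.
Qed.

Lemma T_inh : exists j0 : T, true.
Proof.
have [a ha] : exists a, a \in soc_seq N.
  by move: (soc_nonempty N); case: (soc_seq N) => [|a l] //= _; exists a; rewrite mem_head.
by exists (SeqSub ha).
Qed.

Lemma pareto_N (Phi : T -> E) x y : (forall j, ~~ ind j (Phi j) y x) -> ~~ Gr Phi y x.
Proof.
move=> H; have [j0 _] := T_inh.
pose Phi' := fun _ : T => Phi j0.
have hu := hU (Phi := Phi') (eM [set y; x]) (fun _ _ => erefl) j0.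
have g' : Gr Phi' y x = ind j0 (Phi j0) y x.
  by move/fequivP: hu; rewrite /Gr /ind /Rf /Ch => ->.
rewrite (IIA_N (Phi' := Phi')); first by rewrite g'.
move=> j; rewrite /Phi'.
have ag : forall u v, ind j (Phi j0) u v = ind j0 (Phi j0) u v.
  by move=> u v; rewrite /ind /Rf /Ch (nab1_agent (val j) (val j0)).
rewrite !ag.
have h1 := H j; have h2 := H j0.
have t1 := Rf_total (good_nab1 (val j) (Phi j)) x y.
have t2 := Rf_total (good_nab1 (val j0) (Phi j0)) x y.
rewrite /ind in h1 h2 *.
by rewrite (negbTE h1) (negbTE h2); move: t1 t2; rewrite (negbTE h1) (negbTE h2) !orbF => -> ->.
Qed.


Lemma rich_all (j : T) a b c : a != b -> b != c -> a != c ->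
  [/\ exists s, ~~ ind j s b a /\ ~~ ind j s c b,
      exists s, [/\ ~~ ind j s b a, ind j s b c & ind j s c b]
    & exists s, [/\ ind j s a b, ind j s b a & ~~ ind j s c b]].
Proof.
move=> ab bc ac.
have [_ [s2 [h21 h22]] [s3 [h31 h32]] [s4 [h41 h42]]] :=
  hSD (val j) ab bc ac (eM_spec (pairne a b)) (eM_spec (pairne b c)).
have ba : (b == a) = false by apply/negbTE; rewrite eq_sym.
have cb : (c == b) = false by apply/negbTE; rewrite eq_sym.
rewrite /ind /Rf /Ch (pC a b) (pC b c); split.
- by exists s4; rewrite h41 h42 !in_set1 ba cb.
- by exists s3; rewrite h31 h32 !in_set1 !in_set2 ba !eqxx ?orbT.
- by exists s2; rewrite h21 h22 !in_set1 !in_set2 cb !eqxx ?orbT.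
Qed.

Lemma three_W : exists x y z : W, [/\ x != y, y != z & x != z].
Proof.
have [p [q [_ _ pq]]] := card_gt1P hP.
exists [ffun _ => false], [ffun _ => true], [ffun r => r == p]; split.
- by apply/eqP => /ffunP/(_ p); rewrite !ffunE.
- by apply/eqP => /ffunP/(_ q); rewrite !ffunE eq_sym (negbTE pq).
- by apply/eqP => /ffunP/(_ p); rewrite !ffunE eqxx.
Qed.

Lemma dict_N : exists dN : T, forall (Phi : profile E N) e,
    entails (B (nabla Phi e)) (B (nab1 nabla (val dN) (Phi dN) e)).
Proof.
have [dd hd] : exists dd, forall Phi x y, ~~ ind dd (Phi dd) y x -> ~~ Gr Phi y x.
  apply: (@arrow _ T E ind Gr).
  - by move=> j s x y; rewrite /ind; apply: (Rf_total (good_nab1 _ _)).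
  - by move=> j s x y z; rewrite /ind; apply: (Rf_trans (good_nab1 _ _)).
  - by move=> Phi x y; rewrite /Gr; apply: (Rf_total (good_nabla _)).
  - by move=> Phi x y z; rewrite /Gr; apply: (Rf_trans (good_nabla _)).
  - exact: IIA_N.
  - exact: pareto_N.
  - by move=> j a b c ab bc ac; case: (rich_all j ab bc ac).
  - by move=> j a b c ab bc ac; case: (rich_all j ab bc ac).
  - by move=> j a b c ab bc ac; case: (rich_all j ab bc ac).
  - exact: three_W.
exists dd => Phi e w hw.
have gf := good_nabla Phi; have gg := good_nab1 (val dd) (Phi dd).
have MN := models_ne e.
have hw' : w \in Ch (nabla Phi) (models (B e)) by rewrite -(Ch_e gf) inE.
suff : w \in Ch (nab1 nabla (val dd) (Phi dd)) (models (B e)) by rewrite -(Ch_e gg) inE.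
case hg: (w \in _) => //.
case/set0Pn: (Ch_ne (nab1 nabla (val dd) (Phi dd)) (models (B e))) => y hy.
have wM := subsetP (Ch_sub gf MN) w hw'.
have yM := subsetP (Ch_sub gg MN) y hy.
have h1 : ~~ ind dd (Phi dd) w y.
  by apply/negP => hR; move: (Ch_back gg wM hy hR); rewrite hg.
have := hd Phi y w h1.
by rewrite /Gr (Rf_Ch gf hw' yM).
Qed.

End Main.
End Bridge.

Theorem corollary2 (P : finType) (E : Type) (B : E -> form P)
  (d : Order.disp_t) (S : orderType d) (nabla : fusion_op E S) :
  well_founded (fun x y : S => (x < y)%O) ->
  epistemic_space B ->
  1 < #|P| ->
  basic_fusion B nabla ->
  ESF_SD B nabla -> ESF_U B nabla -> ESF_I B nabla ->
  ESF_D B nabla.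
Proof.
move=> _ hES hP hbf hSD hU hI N.
exact: (dict_N hES hbf hSD hU hI hP N).
Qed.
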